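(* Let $\Omega=\{y\in\mathbb{R}^n: a_i^Ty\le b_i,\ i=1,\ldots,m\}$, let $x\in\Omega$ and $\alpha>0$, and suppose the nearly-active index set $I(x,\alpha)$ has $q\le n$ elements and $\{a_i:i\in I(x,\alpha)\}$ are linearly independent; label them so that $I(x,\alpha)=\{1,\ldots,q\}$ and let $A=[a_1\ \cdots\ a_q]\in\mathbb{R}^{n\times q}$. Let $u_1,\ldots,u_n$ be an orthonormal set of left singular vectors of $A$ with $u_1,\ldots,u_q$ spanning $\operatorname{col}(A)$. For $i=1,\ldots,q$ let $\hat d_i:=-(A^\dagger)^Te_i$, $d_i:=\frac{\alpha}{\|\hat d_i\|}\hat d_i$, and let $\alpha_i$ be the largest value in $[0,1]$ such that $x-\alpha_id_i\in\Omega$. Define $$\mathcal{D}=\{d_1,\ldots,d_q\}\cup\{-\alpha_1d_1,\ldots,-\alpha_qd_q\}\cup\{\pm\alpha u_{q+1},\ldots,\pm\alpha u_n\}.$$ Then $\mathcal{D}$ is a $\Lambda$-positive spanning set for $B(x,\alpha)\cap\Omega$ with $\Lambda=q\,\kappa(A)+\sqrt{n-q}$.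
   Context: Nearly-active constraints: $I(x,\alpha):=\{i\in\{1,\ldots,m\}: b_i-\alpha\|a_i\|\le a_i^Tx\}$ (constraints whose boundary hyperplane is within distance $\alpha$ of $x$). $A^\dagger=(A^TA)^{-1}A^T$ is the Moore–Penrose pseudoinverse, $\kappa(A)=\|A\|\,\|A^\dagger\|$ is the condition number (operator 2-norms), $e_i\in\mathbb{R}^q$ the coordinate vectors, $B(y,r)=\{z:\|z-y\|\le r\}$. Given $x\in\Omega$, $\alpha>0$, $\Lambda\ge0$, a set $\{d_1,\ldots,d_p\}$ is a $\Lambda$-positive spanning set for $B(x,\alpha)\cap\Omega$ if $x+d_i\in\Omega$ for all $i$ and, for every $v\in\mathbb{R}^n$ with $x+v\in\Omega$ and $\|v\|\le\alpha$, there exists $c\in\mathbb{R}^p$ with $c\ge0$, $v=\sum_ic_id_i$ and $\|c\|_1\le\Lambda$. *)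

(* Defs.v *)
From HB Require Import structures.
From mathcomp Require Import all_boot all_order all_algebra.
From mathcomp Require Import classical_sets reals.
Set Implicit Arguments. Unset Strict Implicit. Unset Printing Implicit Defensive.
Import Order.TTheory GRing.Theory Num.Theory.
Local Open Scope ring_scope.
Local Open Scope classical_set_scope.

Section Defs.
Context {R : realType}.

Definition dotv (n : nat) (u v : 'cV[R]_n) : R := \sum_(k < n) u k 0 * v k 0.
Definition vnorm (n : nat) (v : 'cV[R]_n) : R := Num.sqrt (dotv v v).

Definition opnorm (p r : nat) (M : 'M[R]_(p, r)) : R :=
  sup [set vnorm (M *m v) | v in [set v : 'cV[R]_r | vnorm v <= 1]].

(* Moore-Penrose pseudoinverse of a full-column-rank matrix: (A^T A)^{-1} A^T *)
Definition pinv (n q : nat) (A : 'M[R]_(n, q)) : 'M[R]_(q, n) :=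
  invmx (A^T *m A) *m A^T.

Definition kappa (n q : nat) (A : 'M[R]_(n, q)) : R := opnorm A * opnorm (pinv A).

Definition Omega (n m : nat) (a : 'I_m -> 'cV[R]_n) (b : 'I_m -> R) (y : 'cV[R]_n) : Prop :=
  forall i, dotv (a i) y <= b i.

Definition nearly_active (n m : nat) (a : 'I_m -> 'cV[R]_n) (b : 'I_m -> R)
  (x : 'cV[R]_n) (alpha : R) : {set 'I_m} :=
  [set i | b i - alpha * vnorm (a i) <= dotv (a i) x].

Definition evec (q : nat) (i : 'I_q) : 'cV[R]_q := \col_(k < q) (k == i)%:R.

Definition pos_spanning (n : nat) (Om : 'cV[R]_n -> Prop) (x : 'cV[R]_n) (alpha Lambda : R)
  (D : seq 'cV[R]_n) : Prop :=
  (forall d, d \in D -> Om (x + d)) /\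
  (forall v : 'cV[R]_n, Om (x + v) -> vnorm v <= alpha ->
     exists c : 'I_(size D) -> R,
       (forall k, 0 <= c k) /\
       v = \sum_(k < size D) c k *: nth 0 D k /\
       \sum_(k < size D) `|c k| <= Lambda).
End Defs.

(* Main.v *)
Require Import Defs.
From HB Require Import structures.
From mathcomp Require Import all_boot all_order all_algebra.
From mathcomp Require Import classical_sets reals.
From mathcomp Require Import ring lra zify.
Import Order.TTheory GRing.Theory Num.Theory.
Local Open Scope ring_scope.
Set Implicit Arguments. Unset Strict Implicit.

Section H.
Variable R : realType.
Implicit Types (n : nat).

Lemma dotvE n (u v : 'cV[R]_n) : dotv u v = (u^T *m v) 0 0.
Proof. by rewrite /dotv mxE; apply: eq_bigr => k _; rewrite mxE. Qed.

Lemma dotvC n (u v : 'cV[R]_n) : dotv u v = dotv v u.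
Proof. by apply: eq_bigr => k _; rewrite mulrC. Qed.

Lemma dotvDr n (u v w : 'cV[R]_n) : dotv u (v + w) = dotv u v + dotv u w.
Proof. by rewrite /dotv -big_split; apply: eq_bigr => k _; rewrite mxE mulrDr. Qed.

Lemma dotvZr n c (u v : 'cV[R]_n) : dotv u (c *: v) = c * dotv u v.
Proof. by rewrite /dotv mulr_sumr; apply: eq_bigr => k _; rewrite mxE mulrCA. Qed.

Lemma dotvNr n (u v : 'cV[R]_n) : dotv u (- v) = - dotv u v.
Proof. by rewrite -scaleN1r dotvZr mulN1r. Qed.

Lemma dotvBr n (u v w : 'cV[R]_n) : dotv u (v - w) = dotv u v - dotv u w.
Proof. by rewrite dotvDr dotvNr. Qed.

Lemma dotvDl n (u v w : 'cV[R]_n) : dotv (v + w) u = dotv v u + dotv w u.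
Proof. by rewrite dotvC dotvDr !(dotvC u). Qed.
Lemma dotvZl n c (u v : 'cV[R]_n) : dotv (c *: v) u = c * dotv v u.
Proof. by rewrite dotvC dotvZr dotvC. Qed.
Lemma dotvNl n (u v : 'cV[R]_n) : dotv (- v) u = - dotv v u.
Proof. by rewrite dotvC dotvNr dotvC. Qed.
Lemma dotvBl n (u v w : 'cV[R]_n) : dotv (v - w) u = dotv v u - dotv w u.
Proof. by rewrite dotvDl dotvNl. Qed.

Lemma dotv0r n (u : 'cV[R]_n) : dotv u 0 = 0.
Proof. by rewrite /dotv big1 // => k _; rewrite mxE mulr0. Qed.
Lemma dotv0l n (u : 'cV[R]_n) : dotv 0 u = 0.
Proof. by rewrite dotvC dotv0r. Qed.

Lemma dotv_sumr n (I : Type) (r : seq I) (P : pred I) (F : I -> 'cV[R]_n) u :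
  dotv u (\sum_(i <- r | P i) F i) = \sum_(i <- r | P i) dotv u (F i).
Proof.
elim/big_rec2: _ => [|i y1 y2 _ <-]; first by rewrite dotv0r.
by rewrite dotvDr.
Qed.

Lemma dotvvge0 n (u : 'cV[R]_n) : 0 <= dotv u u.
Proof. by apply: sumr_ge0 => k _; rewrite -expr2 sqr_ge0. Qed.

Lemma dotvv_eq0 n (u : 'cV[R]_n) : dotv u u = 0 -> u = 0.
Proof.
move=> h; apply/matrixP => i j; rewrite (ord1 j) mxE.
have H : (fun k => u k 0 * u k 0) i = 0.
  apply: (@psumr_eq0P _ _ predT (fun k => u k 0 * u k 0) _ h i isT).
  by move=> k _; rewrite -expr2 sqr_ge0.
by move: H => /= /eqP; rewrite mulf_eq0 orbb => /eqP.
Qed.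

Lemma vnorm_ge0 n (u : 'cV[R]_n) : 0 <= vnorm u.
Proof. exact: sqrtr_ge0. Qed.

Lemma vnorm_sq n (u : 'cV[R]_n) : vnorm u ^+ 2 = dotv u u.
Proof. by rewrite /vnorm sqr_sqrtr // dotvvge0. Qed.

Lemma vnorm_eq0 n (u : 'cV[R]_n) : vnorm u = 0 -> u = 0.
Proof. by move=> h; apply: dotvv_eq0; rewrite -vnorm_sq h expr0n. Qed.

Lemma vnormZ n c (u : 'cV[R]_n) : vnorm (c *: u) = `|c| * vnorm u.
Proof.
rewrite /vnorm dotvZl dotvZr mulrA -expr2 sqrtrM ?sqr_ge0 //.
by rewrite sqrtr_sqr.
Qed.

Lemma vnormN n (u : 'cV[R]_n) : vnorm (- u) = vnorm u.
Proof. by rewrite -scaleN1r vnormZ normrN1 mul1r. Qed.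

Lemma CS2 n (u v : 'cV[R]_n) : dotv u v ^+ 2 <= dotv u u * dotv v v.
Proof.
have [v0|] := eqVneq (dotv v v) 0.
  by rewrite (dotvv_eq0 v0) dotv0r dotv0r expr0n /= mulr0.
move=> vn0; have vp : 0 < dotv v v by rewrite lt_def vn0 dotvvge0.
set w := dotv v v *: u - dotv u v *: v.
have := dotvvge0 w.
rewrite /w !(dotvBl, dotvBr, dotvZl, dotvZr) (dotvC v u).
move=> h.
have : 0 <= dotv v v * (dotv u u * dotv v v - dotv u v ^+ 2).
  by move: h; set a := dotv u u; set b := dotv v v; set c := dotv u v;
     congr (_ <= _); ring.
by rewrite pmulr_rge0 // subr_ge0.
Qed.

Lemma CS n (u v : 'cV[R]_n) : `|dotv u v| <= vnorm u * vnorm v.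
Proof.
rewrite /vnorm -sqrtrM ?dotvvge0 // -sqrtr_sqr ler_sqrt ?CS2 //.
by rewrite mulr_ge0 ?dotvvge0.
Qed.

End H.
Section H2.
Variable R : realType.
Implicit Types (n : nat).

Lemma dotv_evec n (i : 'I_n) (y : 'cV[R]_n) : dotv (evec i) y = y i 0.
Proof.
rewrite /dotv (bigD1 i) //= big1 ?addr0; first by rewrite mxE eqxx mul1r.
by move=> k /negbTE kn; rewrite mxE kn mul0r.
Qed.

Lemma vnorm_evec n (i : 'I_n) : vnorm (evec (R:=R) i) = 1.
Proof. by rewrite /vnorm dotv_evec mxE eqxx sqrtr1. Qed.

Lemma coord_le n (i : 'I_n) (y : 'cV[R]_n) : `|y i 0| <= vnorm y.
Proof. by rewrite -dotv_evec (le_trans (CS _ _)) // vnorm_evec mul1r. Qed.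

Lemma mul_evec p r (M : 'M[R]_(p, r)) i : M *m evec i = col i M.
Proof.
apply/matrixP => k j; rewrite !mxE (bigD1 i) //= big1 ?addr0.
  by rewrite mxE eqxx mulr1.
by move=> l /negbTE ln; rewrite mxE ln mulr0.
Qed.

Lemma opnorm_ub p r (M : 'M[R]_(p, r)) v : vnorm (M *m v) <= opnorm M * vnorm v.
Proof.
have hs : has_sup [set vnorm (M *m v) | v in [set v : 'cV[R]_r | vnorm v <= 1]].
  split.
    exists (vnorm (M *m 0)); exists 0 => //=.
    by rewrite /vnorm dotv0r sqrtr0 ler01.
  exists (Num.sqrt (\sum_k (\sum_j `|M k j|) ^+ 2)) => y [u /= hu <-].
  rewrite /vnorm ler_sqrt; last by apply: sumr_ge0 => k _; rewrite sqr_ge0.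
  apply: ler_sum => k _; rewrite -expr2 -real_normK ?num_real //.
  rewrite lerXn2r ?nnegrE ?normr_ge0 ?sumr_ge0 //.
  rewrite mxE (le_trans (ler_norm_sum _ _ _)) //; apply: ler_sum => j _.
  rewrite normrM ler_piMr ?normr_ge0 //.
  exact: le_trans (coord_le _ _) hu.
have [v0|vn0] := eqVneq (vnorm v) 0.
  by rewrite v0 (vnorm_eq0 v0) mulmx0 mulr0 /vnorm dotv0r sqrtr0.
have vp : 0 < vnorm v by rewrite lt_def vn0 vnorm_ge0.
have h1 : vnorm (M *m ((vnorm v)^-1 *: v)) <= opnorm M.
  apply: sup_upper_bound => //; exists ((vnorm v)^-1 *: v) => //=.
  by rewrite vnormZ ger0_norm ?invr_ge0 ?vnorm_ge0 // mulVf.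
move: h1; rewrite -scalemxAr vnormZ ger0_norm ?invr_ge0 ?vnorm_ge0 //.
by rewrite ler_pdivrMl // mulrC.
Qed.

End H2.
Section H3.
Variable R : realType.
Variable n : nat.

Definition reprn (D : seq 'cV[R]_n) v (L : R) := exists c : nat -> R,
  (forall k, 0 <= c k) /\ v = \sum_(0 <= k < size D) c k *: nth 0 D k /\
  \sum_(0 <= k < size D) `|c k| <= L.

Lemma reprn_le D v L L' : reprn D v L -> L <= L' -> reprn D v L'.
Proof. by move=> [c [h1 [h2 h3]]] hl; exists c; split => //; split => //; apply: le_trans hl. Qed.

Lemma reprn_nil : reprn [::] 0 0.
Proof. by exists (fun=> 0); rewrite /= !big_geq. Qed.

Lemma reprn_1 y c : 0 <= c -> reprn [:: y] (c *: y) c.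
Proof.
move=> c0; exists (fun=> c); split => //=; rewrite !big_nat1 /=.
by rewrite ger0_norm.
Qed.

Lemma reprn_cat D1 D2 v1 v2 L1 L2 : reprn D1 v1 L1 -> reprn D2 v2 L2 ->
  reprn (D1 ++ D2) (v1 + v2) (L1 + L2).
Proof.
move=> [c1 [p1 [e1 l1]]] [c2 [p2 [e2 l2]]].
pose c k := if (k < size D1)%N then c1 k else c2 (k - size D1)%N.
have hc : forall k, 0 <= c k by move=> k; rewrite /c; case: ifP.
exists c; split => //; rewrite size_cat.
have split_sum : forall (F : nat -> 'cV[R]_n) (G : nat -> R) , True by [].
split.
  rewrite (big_cat_nat _ (leq_addr _ _)) //=; congr (_ + _).
    rewrite e1; apply: eq_big_nat => k /andP[_ hk].
    by rewrite /c hk nth_cat hk.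
  rewrite -{1}(add0n (size D1)) big_addn addKn e2; apply: eq_bigr => k _.
  by rewrite /c ltnNge leq_addl /= addnK nth_cat ltnNge leq_addl /= addnK.
rewrite (big_cat_nat _ (leq_addr _ _)) //=; apply: lerD.
  apply: le_trans l1; rewrite le_eqVlt; apply/orP; left; apply/eqP.
  apply: eq_big_nat => k /andP[_ hk].
  by rewrite /c hk.
apply: le_trans l2; rewrite le_eqVlt; apply/orP; left; apply/eqP.
rewrite -{1}(add0n (size D1)) big_addn addKn; apply: eq_bigr => k _.
by rewrite /c ltnNge leq_addl /= addnK.
Qed.

Lemma reprn_map (T : Type) (s : seq T) (f : T -> 'cV[R]_n) (h : T -> R) :
  (forall t, 0 <= h t) ->
  reprn (map f s) (\sum_(t <- s) h t *: f t) (\sum_(t <- s) h t).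
Proof.
move=> hp; elim: s => [|t s IH]; first by rewrite !big_nil; exact: reprn_nil.
rewrite !big_cons /=; exact: (reprn_cat (D1 := [:: f t]) (reprn_1 _ (hp t)) IH).
Qed.

Lemma reprn_pos (D : seq 'cV[R]_n) v L : reprn D v L ->
  exists c : 'I_(size D) -> R, (forall k, 0 <= c k) /\
       v = \sum_(k < size D) c k *: nth 0 D k /\
       \sum_(k < size D) `|c k| <= L.
Proof.
move=> [c [h1 [h2 h3]]]; exists (fun k => c k); split => //.
by rewrite -(big_mkord xpredT (fun k => c k *: nth 0 D k)) -(big_mkord xpredT (fun k => `|c k|)).
Qed.

End H3.
Unset Implicit Arguments.
Lemma cnt_ge (q N : nat) : (\sum_(j < N) (q <= j : nat) = N - q)%N.
Proof.
elim: N => [|N IH]; first by rewrite big_ord0.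
rewrite big_ord_recr /= IH; case: (leqP q N) => h /=; lia.
Qed.

Lemma mulmx_col_sum (R : realType) p r (M : 'M[R]_(p, r)) (y : 'cV[R]_r) :
  M *m y = \sum_j y j 0 *: col j M.
Proof.
apply/matrixP => k l; rewrite (ord1 l) mxE summxE; apply: eq_bigr => j _.
by rewrite !mxE mulrC.
Qed.

Theorem theorem5p8 (R : realType) (n m q : nat)
  (a : 'I_m -> 'cV[R]_n) (b : 'I_m -> R) (x : 'cV[R]_n) (alpha : R)
  (sigma : 'I_q -> 'I_m)
  (U : 'M[R]_n) (V : 'M[R]_q) (s : 'I_q -> R)
  (alph : 'I_q -> R) :
  Omega a b x -> 0 < alpha ->
  injective sigma ->
  (forall i, i \in nearly_active a b x alpha <-> exists j, sigma j = i) ->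
  (q <= n)%N ->
  let A : 'M[R]_(n, q) := \matrix_(k < n, j < q) a (sigma j) k 0 in
  row_free A^T ->
  U^T *m U = 1%:M -> V^T *m V = 1%:M -> (forall j, 0 <= s j) ->
  A = U *m (\matrix_(i < n, j < q) (if (i : nat) == j then s j else 0)) *m V^T ->
  (forall v : 'cV[R]_n, (exists c : 'cV[R]_q, v = A *m c) <->
     exists c : 'I_n -> R, v = \sum_(j < n | (j < q)%N) c j *: col j U) ->
  let dhat (i : 'I_q) : 'cV[R]_n := - ((pinv A)^T *m evec i) in
  let d (i : 'I_q) : 'cV[R]_n := (alpha / vnorm (dhat i)) *: dhat i in
  (forall i, 0 <= alph i <= 1 /\ Omega a b (x - alph i *: d i) /\
     (forall t, 0 <= t <= 1 -> Omega a b (x - t *: d i) -> t <= alph i)) ->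
  let D : seq 'cV[R]_n :=
    [seq d i | i <- enum 'I_q] ++ [seq - (alph i *: d i) | i <- enum 'I_q] ++
    [seq alpha *: col j U | j <- [seq j <- enum 'I_n | (q <= nat_of_ord j)%N]] ++
    [seq - (alpha *: col j U) | j <- [seq j <- enum 'I_n | (q <= nat_of_ord j)%N]] in
  pos_spanning (Omega a b) x alpha (q%:R * kappa A + Num.sqrt (n - q)%:R) D.
Proof.
move=> Hx Ha Hinj HI Hqn A Hfree HU HV Hs HSVD Hspan dhat d Halph D.
have F0 : forall j w, dotv (a (sigma j)) w = (A^T *m w) j 0.
  by move=> j w; rewrite mxE /dotv; apply: eq_bigr => k _; rewrite !mxE.
set M := A^T *m A.
have Mu : M \in unitmx.
  rewrite -row_free_unit; apply: inj_row_free => r hr.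
  have h1 : r *m A^T = 0.
    apply: trmx_inj; rewrite trmx0; apply: dotvv_eq0.
    rewrite dotvE trmxK trmx_mul trmxK mulmxA -(mulmxA r) -/M hr mul0mx.
    by rewrite !mxE.
  apply: (row_free_inj Hfree); by rewrite h1 mul0mx.
set P := pinv A.
have F1 : P *m A = 1%:M by rewrite /P /pinv -mulmxA mulVmx.
have F3 : P^T *m (A^T *m A) = A.
  rewrite /P /pinv trmx_mul trmxK trmx_inv trmx_mul trmxK -/M -mulmxA mulVmx //.
  by rewrite mulmx1.
have F2 : A^T *m P^T = 1%:M by rewrite -trmx_mul F1 trmx1.
have dhat_dot : forall i j, dotv (a (sigma j)) (dhat i) = - (j == i)%:R.
  move=> i j; rewrite F0 /dhat mulmxN mulmxA F2 mul1mx !mxE.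
  by [].
have nd_gt0 : forall i, 0 < vnorm (dhat i).
  move=> i; rewrite lt_def vnorm_ge0 andbT; apply/eqP => /vnorm_eq0 h0.
  by have := dhat_dot i i; rewrite h0 dotv0r eqxx => /eqP; rewrite eq_sym oppr_eq0 oner_eq0.
have nd_d : forall i, vnorm (d i) = alpha.
  move=> i; rewrite /d vnormZ ger0_norm ?divr_ge0 ?vnorm_ge0 ?ltW //.
  by rewrite -mulrA mulVf ?mulr1 // gt_eqF.
have d_dot : forall i j, dotv (a (sigma j)) (d i) = - (alpha / vnorm (dhat i)) * (j == i)%:R.
  by move=> i j; rewrite /d dotvZr dhat_dot mulrN mulNr.
have UUt : U *m U^T = 1%:M by apply: mulmx1C.
have Ucol : forall j k, dotv (col j U) (col k U) = (j == k)%:R.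
  move=> j k; transitivity ((U^T *m U) j k); last by rewrite HU mxE.
  by rewrite mxE; apply: eq_bigr => l _; rewrite !mxE.
have Unorm : forall j, vnorm (col j U) = 1.
  by move=> j; rewrite /vnorm Ucol eqxx sqrtr1.
have perp : forall (j : 'I_n) (k : 'I_q), (q <= j)%N -> dotv (a (sigma k)) (col j U) = 0.
  move=> j k hj.
  have -> : dotv (a (sigma k)) (col j U) = (U^T *m A) j k.
    by rewrite mxE /dotv; apply: eq_bigr => l _; rewrite !mxE mulrC.
  rewrite HSVD !mulmxA HU mul1mx mxE big1 // => l _; rewrite !mxE.
  have -> : ((j : nat) == l) = false.
    by apply/negbTE; rewrite neq_ltn (leq_trans (ltn_ord l) hj) orbT.
  by rewrite mul0r.
have Omove : forall y, vnorm y <= alpha ->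
    (forall j, dotv (a (sigma j)) (x + y) <= b (sigma j)) -> Omega a b (x + y).
  move=> y hy hj k; case: (boolP (k \in nearly_active a b x alpha)) => hk.
    by have [j <-] := (HI k).1 hk; apply: hj.
  move: hk; rewrite inE -ltNge => hk.
  rewrite dotvDr.
  have : dotv (a k) y <= alpha * vnorm (a k).
    apply: le_trans (ler_norm _) _; apply: le_trans (CS _ _) _.
    by rewrite mulrC ler_wpM2r ?vnorm_ge0.
  move: hk; lra.
have dxle : forall (j : 'I_q) y, dotv (a (sigma j)) y <= 0 ->
    dotv (a (sigma j)) (x + y) <= b (sigma j).
  by move=> j y hy; rewrite dotvDr; have := Hx (sigma j); lra.
split.
  move=> y; rewrite /D !mem_cat => /orP[|/orP[|/orP[]]] /mapP[i hi ->].
  - apply: Omove; first by rewrite nd_d.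
    move=> j; apply: dxle; rewrite d_dot mulNr oppr_le0 mulr_ge0 //.
    by rewrite divr_ge0 ?vnorm_ge0 ?ltW.
  - exact: (Halph i).2.1.
  - move: hi; rewrite mem_filter => /andP[hq _].
    apply: Omove; first by rewrite vnormZ Unorm mulr1 ger0_norm // ltW.
    by move=> j; apply: dxle; rewrite dotvZr perp // mulr0.
  - move: hi; rewrite mem_filter => /andP[hq _].
    apply: Omove; first by rewrite vnormN vnormZ Unorm mulr1 ger0_norm // ltW.
    by move=> j; apply: dxle; rewrite dotvNr dotvZr perp // mulr0 oppr0.
move=> v Hv Hvn.
set z := fun j : 'I_n => dotv (col j U) v.
set w := \sum_(j < n | (q <= j)%N) z j *: col j U.
have zE : forall j, z j = (U^T *m v) j 0.
  by move=> j; rewrite mxE /z /dotv; apply: eq_bigr => k _; rewrite !mxE.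
have vU : v = \sum_j z j *: col j U.
  transitivity (U *m (U^T *m v)); first by rewrite mulmxA UUt mul1mx.
  by rewrite mulmx_col_sum; apply: eq_bigr => j _; rewrite zE.
have vw : v - w = \sum_(j < n | (j < q)%N) z j *: col j U.
  rewrite {1}vU (bigID (fun j : 'I_n => (q <= j)%N)) /= -/w addrC addrK.
  by apply: eq_bigl => j; rewrite -ltnNge.
have [c0 hc0] := (Hspan (v - w)).2 (ex_intro _ z vw).
have ATw : A^T *m w = 0.
  apply/matrixP => k l; rewrite (ord1 l) -F0 /w dotv_sumr big1 ?mxE // => j hj.
  by rewrite dotvZr perp // mulr0.
have vw2 : v - w = P^T *m (A^T *m v).
  have -> : A^T *m v = A^T *m (v - w) by rewrite mulmxBr ATw subr0.
  by rewrite hc0 (mulmxA A^T) mulmxA F3.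
set g := fun i : 'I_q => - dotv (a (sigma i)) v * vnorm (dhat i) / alpha.
have vwg : v - w = \sum_i g i *: d i.
  rewrite vw2 mulmx_col_sum; apply: eq_bigr => i _.
  have -> : col i P^T = - dhat i by rewrite /dhat mul_evec opprK.
  rewrite /d scalerA -F0 scalerN -scaleNr; congr (_ *: _).
  rewrite /g; field.
  by rewrite (gt_eqF (nd_gt0 i)) (gt_eqF Ha).
have Kal : forall i, g i < 0 -> Num.min 1 (- g i) <= alph i.
  move=> i gi; set t := Num.min 1 (- g i).
  have t0 : 0 <= t by rewrite le_min ler01 oppr_ge0 ltW.
  have t1 : t <= 1 by rewrite ge_min lexx.
  have t2 : t <= - g i by rewrite ge_min lexx orbT.
  apply: (Halph i).2.2; first by rewrite t0 t1.
  rewrite -[x - _]/(x + - (t *: d i)); apply: Omove.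
    by rewrite vnormN vnormZ nd_d ger0_norm // -[X in _ <= X]mul1r ler_wpM2r // ltW.
  move=> j; rewrite dotvDr dotvNr dotvZr d_dot.
  have [->|ne] := eqVneq j i; last first.
    by rewrite /= mulr0n mulr0 mulr0 oppr0 addr0; apply: Hx.
  rewrite /= mulr1n mulr1.
  set r := alpha / vnorm (dhat i).
  have r0 : 0 <= r by rewrite divr_ge0 ?vnorm_ge0 // ltW.
  have e1 : - g i * r = dotv (a (sigma i)) v.
    rewrite /r /g; field; by rewrite (gt_eqF (nd_gt0 i)) (gt_eqF Ha).
  have e2 : t * r <= - g i * r by rewrite ler_wpM2r.
  have hv := Hv (sigma i); rewrite dotvDr in hv.
  by rewrite mulrN opprK; apply: le_trans hv; rewrite lerD2l -e1.
have colA : forall i, col i A = a (sigma i).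
  by move=> i; apply/matrixP => k l; rewrite (ord1 l) !mxE.
have na : forall i, vnorm (a (sigma i)) <= opnorm A.
  move=> i; rewrite -colA -mul_evec; apply: le_trans (opnorm_ub _ _) _.
  by rewrite vnorm_evec mulr1.
have dP : forall i u, dotv (dhat i) u = - (P *m u) i 0.
  move=> i u; rewrite /dhat mul_evec dotvNl; congr (- _).
  by rewrite mxE /dotv; apply: eq_bigr => k _; rewrite !mxE.
have ndle : forall i, vnorm (dhat i) <= opnorm P.
  move=> i; have h : vnorm (dhat i) * vnorm (dhat i) <= opnorm P * vnorm (dhat i).
    rewrite -expr2 vnorm_sq dP; apply: le_trans _ (opnorm_ub P (dhat i)).
    apply: le_trans (ler_norm _) _; rewrite normrN; exact: coord_le.
  by rewrite ler_pM2r in h.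
have Kge : forall i, vnorm (a (sigma i)) * vnorm (dhat i) <= kappa A.
  by move=> i; rewrite /kappa ler_pM ?vnorm_ge0.
have K1 : forall i : 'I_q, 1 <= kappa A.
  move=> i; apply: le_trans _ (Kge i); apply: le_trans _ (CS _ _).
  by rewrite dhat_dot eqxx normrN normr1.
have gle : forall i, `|g i| <= kappa A.
  move=> i; apply: le_trans _ (Kge i).
  have -> : g i = - dotv (a (sigma i)) v * (vnorm (dhat i) / alpha) by rewrite /g mulrA.
  rewrite normrM normrN (ger0_norm (divr_ge0 (vnorm_ge0 _) (ltW Ha))).
  have hy : `|dotv (a (sigma i)) v| <= vnorm (a (sigma i)) * alpha.
    by apply: le_trans (CS _ _) _; rewrite ler_wpM2l ?vnorm_ge0.
  apply: le_trans (ler_wpM2r (divr_ge0 (vnorm_ge0 _) (ltW Ha)) hy) _.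
  rewrite le_eqVlt; apply/orP; left; apply/eqP; field.
  by rewrite (gt_eqF Ha).
set h1 := fun i : 'I_q => if 0 <= g i then g i else 0.
set h2 := fun i : 'I_q => if 0 <= g i then 0 else - g i / alph i.
have h12 : forall i, h1 i + h2 i <= kappa A.
  move=> i; rewrite /h1 /h2; case: ifP => hg.
    by rewrite addr0; apply: le_trans (ler_norm _) (gle i).
  have gn : g i < 0 by rewrite ltNge hg.
  have := Kal i gn; rewrite add0r.
  have [h|h] := lerP 1 (- g i).
    move=> a1.
    have ap : 0 < alph i by apply: lt_le_trans _ a1; exact: ltr01.
    rewrite ler_pdivrMr //; apply: le_trans (_ : - g i <= kappa A * 1) _.
      by rewrite mulr1; apply: le_trans _ (gle i); rewrite -normrN ler_norm.
    by apply: ler_wpM2l => //; apply: le_trans ler01 (K1 i).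
  move=> a1.
  have ap : 0 < alph i by apply: lt_le_trans _ a1; rewrite oppr_gt0.
  rewrite ler_pdivrMr //; apply: le_trans a1 _.
  by rewrite -[X in X <= _]mul1r ler_wpM2r ?(ltW ap) ?K1.
have h1ge : forall i, 0 <= h1 i by move=> i; rewrite /h1; case: ifP.
have h2ge : forall i, 0 <= h2 i.
  move=> i; rewrite /h2; case: ifP => // hg; rewrite divr_ge0 //.
    by rewrite oppr_ge0 ltW // ltNge hg.
  exact: (proj1 (andP (Halph i).1)).
set h3 := fun j : 'I_n => if 0 <= z j then z j / alpha else 0.
set h4 := fun j : 'I_n => if 0 <= z j then 0 else - z j / alpha.
have h3ge : forall j, 0 <= h3 j.
  by move=> j; rewrite /h3; case: ifP => // hz; rewrite divr_ge0 // ltW.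
have h4ge : forall j, 0 <= h4 j.
  move=> j; rewrite /h4; case: ifP => // hz; rewrite divr_ge0 ?(ltW Ha) //.
  by rewrite oppr_ge0 ltW // ltNge hz.
have h34 : forall j, h3 j + h4 j = `|z j| / alpha.
  move=> j; rewrite /h3 /h4; case: ifP => hz.
    by rewrite addr0 ger0_norm.
  by rewrite add0r ltr0_norm // ltNge hz.
have Sz : \sum_(j < n | (q <= j)%N) `|z j| <= Num.sqrt (n - q)%:R * alpha.
  pose e : 'cV[R]_n := \col_j ((q <= j)%N)%:R.
  pose t : 'cV[R]_n := \col_j (if (q <= j)%N then `|z j| else 0).
  have et : dotv e t = \sum_(j < n | (q <= j)%N) `|z j|.
    rewrite /dotv [RHS]big_mkcond; apply: eq_bigr => j _; rewrite !mxE.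
    by case: ifP; rewrite ?mul1r ?mul0r.
  have ne : vnorm e = Num.sqrt (n - q)%:R.
    rewrite /vnorm -cnt_ge natr_sum; congr Num.sqrt; apply: eq_bigr => j _.
    by rewrite !mxE; case: (q <= j)%N; rewrite ?mulr1 ?mulr0.
  have Zv : \sum_j z j * z j = dotv v v.
    transitivity (dotv (U^T *m v) (U^T *m v)).
      by rewrite /dotv; apply: eq_bigr => j _; rewrite zE.
    by rewrite !dotvE trmx_mul trmxK mulmxA -(mulmxA v^T) UUt mulmx1.
  have nt : vnorm t <= alpha.
    apply: le_trans Hvn; rewrite /vnorm ler_sqrt ?dotvvge0 // -Zv.
    apply: ler_sum => j _; rewrite !mxE; case: ifP => _.
      by rewrite -normrM ger0_norm // -expr2 sqr_ge0.
    by rewrite mulr0 -expr2 sqr_ge0.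
  rewrite -et; apply: le_trans (ler_norm _) _; apply: le_trans (CS _ _) _.
  by rewrite ne ler_wpM2l ?sqrtr_ge0.
set J := [seq j <- enum 'I_n | (q <= nat_of_ord j)%N].
have R1 := reprn_map (enum 'I_q) d h1ge.
have R2 := reprn_map (enum 'I_q) (fun i => - (alph i *: d i)) h2ge.
have R3 := reprn_map J (fun j => alpha *: col j U) h3ge.
have R4 := reprn_map J (fun j => - (alpha *: col j U)) h4ge.
have RR := reprn_cat R1 (reprn_cat R2 (reprn_cat R3 R4)).
apply: reprn_pos.
have E12 : \sum_(t <- enum 'I_q) h1 t *: d t +
    \sum_(t <- enum 'I_q) h2 t *: - (alph t *: d t) = v - w.
  rewrite -big_split big_enum /= vwg; apply: eq_bigr => i _.
  rewrite /h1 /h2; case: ifP => hg; first by rewrite scale0r addr0.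
  have gn : g i < 0 by rewrite ltNge hg.
  have ap : 0 < alph i.
    by apply: lt_le_trans _ (Kal i gn); rewrite lt_min ltr01 oppr_gt0 gn.
  rewrite scale0r add0r scalerN scalerA -scaleNr; congr (_ *: _).
  by field; rewrite gt_eqF.
have E34 : \sum_(t <- J) h3 t *: (alpha *: col t U) +
    \sum_(t <- J) h4 t *: - (alpha *: col t U) = w.
  rewrite -big_split /J big_filter big_enum_cond /w; apply: eq_bigr => j _.
  rewrite /h3 /h4; case: ifP => _ /=; rewrite scale0r ?addr0 ?add0r ?scalerA;
    rewrite ?scalerN ?scalerA -?scaleNr; congr (_ *: _); field; by rewrite gt_eqF.
have C12 : \sum_(t <- enum 'I_q) h1 t + \sum_(t <- enum 'I_q) h2 t <= q%:R * kappa A.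
  rewrite -big_split big_enum /=; apply: le_trans (ler_sum _ (fun i _ => h12 i)) _.
  by rewrite sumr_const card_ord mulr_natl.
have C34 : \sum_(t <- J) h3 t + \sum_(t <- J) h4 t <= Num.sqrt (n - q)%:R.
  rewrite -big_split /J big_filter big_enum_cond /=.
  under eq_bigr do rewrite h34.
  by rewrite -mulr_suml ler_pdivrMr.
have HL := reprn_le RR (_ : _ <= q%:R * kappa A + Num.sqrt (n - q)%:R).
move: HL; rewrite [X in reprn _ X _]addrA E12 E34 subrK; apply.
by rewrite addrA; apply: lerD.
Qed.
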